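(* Let $\lambda>0$, $\mu\in(0,\tfrac15]$ (the paper writes $\mu=\iota^3$) and $A>0$. Set $$\gamma_1:=\frac12\min\Big\{\frac{8\lambda}{5(3+800\lambda)},\ \frac1{1500},\ \frac{1}{27(13\lambda+12)(10\lambda+\mu+9)^2}\Big\},\qquad \gamma_2:=\max\{8\lambda+1+\gamma_1,\ 4\lambda+6+\gamma_1\}.$$ Let $Z_0,\dots,Z_7\in\mathbb{R}$ with $\sum_{\ell=0}^7|Z_\ell|<\gamma_1$, and let $\mathfrak B=\frac1A M$ where $$M=\begin{pmatrix}4\lambda+Z_1 & Z_2 & \frac{2(3-8\mu)}{15}-4\lambda+Z_3 & Z_4 & 0\\ 0 & \frac{25}{36}+Z_0 & 0&0&0\\ -\frac{2(3-8\mu)}{15}-4\lambda & 0 & 4\lambda+\frac{2(3-8\mu)}{15} & 0 & 0\\ 0 & \frac{2(1-\mu)}{3} & -\frac{2(1-\mu)}{5}+Z_5 & 4\lambda+4+Z_6 & 2\mu\\ 0&0& -\frac{(3\mu+2)^2}{6(10\lambda+\mu+9)} & \frac43+Z_7 & \frac{(3\mu+2)^2}{2(10\lambda+\mu+9)}\end{pmatrix}.$$ Then for every nonzero $\eta\in\mathbb{R}^5$, $$\frac{\gamma_1}{A}\,\eta^T\eta<\eta^T\mathfrak B\eta<\frac{\gamma_2}{A}\,\eta^T\eta .$$ *)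

(* Defs.v *)
From mathcomp Require Import all_boot all_order all_algebra.
Set Implicit Arguments. Unset Strict Implicit. Unset Printing Implicit Defensive.
Import Order.TTheory GRing.Theory Num.Theory.
Local Open Scope ring_scope.

Definition gamma1 (R : realFieldType) (lam mu : R) : R :=
  2^-1 * Num.min (8 * lam / (5 * (3 + 800 * lam)))
          (Num.min (1500^-1)
             ((27 * (13 * lam + 12) * (10 * lam + mu + 9) ^+ 2)^-1)).

Definition gamma2 (R : realFieldType) (lam mu : R) : R :=
  Num.max (8 * lam + 1 + gamma1 lam mu) (4 * lam + 6 + gamma1 lam mu).

Definition Mmat (R : realFieldType) (lam mu Z0 Z1 Z2 Z3 Z4 Z5 Z6 Z7 : R)
  : 'M[R]_5 :=
  let c := 2 * (3 - 8 * mu) / 15 in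
  let d := 10 * lam + mu + 9 in
  let e := (3 * mu + 2) ^+ 2 in
  \matrix_(i < 5, j < 5)
   nth (0 : R) (nth [::] [:: [:: 4 * lam + Z1; Z2; c - 4 * lam + Z3; Z4; 0];
       [:: 0; 25 / 36 + Z0; 0; 0; 0];
       [:: - c - 4 * lam; 0; 4 * lam + c; 0; 0];
       [:: 0; 2 * (1 - mu) / 3; - (2 * (1 - mu) / 5) + Z5; 4 * lam + 4 + Z6; 2 * mu];
       [:: 0; 0; - (e / (6 * d)); 4 / 3 + Z7; e / (2 * d)] ] i) j.

Definition qform (R : ringType) (n : nat) (B : 'M[R]_n) (eta : 'cV[R]_n) : R :=
  ((eta^T *m B *m eta) 0 0).

(* Main.v *)
Require Import Defs.
From mathcomp Require Import all_boot all_order all_algebra.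
From mathcomp Require Import reals.
From mathcomp Require Import ring lra.
Import Order.TTheory GRing.Theory Num.Theory.
Local Open Scope ring_scope.

Lemma pert (R : realFieldType) (z u v N : R) :
  u ^+ 2 <= N -> v ^+ 2 <= N -> - (`|z| * N) <= z * u * v <= `|z| * N.
Proof.
move=> hu hv.
have h1 : `|u * v| <= N by rewrite ler_norml; apply/andP; split; nra.
have h2 : `|z * u * v| <= `|z| * N.
  by rewrite -mulrA normrM; apply: ler_wpM2l => //; apply: normr_ge0.
by rewrite -ler_norml.
Qed.
Lemma Pbound (R : realFieldType) (Z0 Z1 Z2 Z3 Z4 Z5 Z6 Z7 x0 x1 x2 x3 x4 N sZ : R) :
  N = x0 ^+ 2 + x1 ^+ 2 + x2 ^+ 2 + x3 ^+ 2 + x4 ^+ 2 ->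
  sZ = `|Z0| + `|Z1| + `|Z2| + `|Z3| + `|Z4| + `|Z5| + `|Z6| + `|Z7| ->
  - (sZ * N) <= Z1 * x0 * x0 + Z2 * x0 * x1 + Z3 * x0 * x2 + Z4 * x0 * x3 + Z0 * x1 * x1
   + Z5 * x3 * x2 + Z6 * x3 * x3 + Z7 * x4 * x3 <= sZ * N.
Proof.
move=> hN hsZ.
have s0 := sqr_ge0 x0; have s1 := sqr_ge0 x1; have s2 := sqr_ge0 x2;
have s3 := sqr_ge0 x3; have s4 := sqr_ge0 x4.
have u0 : x0 ^+ 2 <= N by rewrite hN; lra.
have u1 : x1 ^+ 2 <= N by rewrite hN; lra.
have u2 : x2 ^+ 2 <= N by rewrite hN; lra.
have u3 : x3 ^+ 2 <= N by rewrite hN; lra.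
have u4 : x4 ^+ 2 <= N by rewrite hN; lra.
have /andP[p1 q1] := @pert _ Z1 _ _ _ u0 u0.
have /andP[p2 q2] := @pert _ Z2 _ _ _ u0 u1.
have /andP[p3 q3] := @pert _ Z3 _ _ _ u0 u2.
have /andP[p4 q4] := @pert _ Z4 _ _ _ u0 u3.
have /andP[p0 q0] := @pert _ Z0 _ _ _ u1 u1.
have /andP[p5 q5] := @pert _ Z5 _ _ _ u3 u2.
have /andP[p6 q6] := @pert _ Z6 _ _ _ u3 u3.
have /andP[p7 q7] := @pert _ Z7 _ _ _ u4 u3.
rewrite hsZ.
clear -p0 p1 p2 p3 p4 p5 p6 p7 q0 q1 q2 q3 q4 q5 q6 q7.
apply/andP; split; lra.
Qed.
Lemma blk2 (R : realFieldType) (P g Q x y : R) :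
  0 < P -> g ^+ 2 <= 4 * P * Q -> 0 <= P * x ^+ 2 + g * x * y + Q * y ^+ 2.
Proof.
move=> hP hd.
have e : 4 * P * (P * x ^+ 2 + g * x * y + Q * y ^+ 2) =
   (2 * P * x + g * y) ^+ 2 + (4 * P * Q - g ^+ 2) * y ^+ 2 by field.
have : 0 <= 4 * P * (P * x ^+ 2 + g * x * y + Q * y ^+ 2).
  rewrite e; apply: addr_ge0; first exact: sqr_ge0.
  apply: mulr_ge0; [lra | exact: sqr_ge0].
rewrite pmulr_rge0 //; lra.
Qed.

Definition Q0 {R : realFieldType} (l mu dl x0 x1 x2 x3 x4 : R) : R :=
  4 * l * x0 ^+ 2 - 8 * l * x0 * x2 + (4 * l + 2 * (3 - 8 * mu) / 15) * x2 ^+ 2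
  + 25 / 36 * x1 ^+ 2 + 2 * (1 - mu) / 3 * x1 * x3 - 2 * (1 - mu) / 5 * x2 * x3
  + (4 * l + 4) * x3 ^+ 2 + (2 * mu + 4 / 3) * x3 * x4 - dl * x2 * x4
  + 3 * dl * x4 ^+ 2.

Lemma lowerQ (R : realFieldType) (l mu d dl m x0 x1 x2 x3 x4 : R) :
  0 < l -> 0 < mu -> mu <= 5^-1 -> d = 10 * l + mu + 9 ->
  6 * d * dl = (3 * mu + 2) ^+ 2 -> 0 <= m -> 15 * m <= 8 * l ->
  1500 * m <= 1 -> m * (27 * (13 * l + 12) * d ^+ 2) <= 1 ->
  m * (x0 ^+ 2 + x1 ^+ 2 + x2 ^+ 2 + x3 ^+ 2 + x4 ^+ 2) <= Q0 l mu dl x0 x1 x2 x3 x4.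
Proof.
move=> hl hmu0 hmu1 hd hdl hm0 hma hmb hmc.
have hmu1' : mu <= 1/5 by rewrite div1r.
have hd9 : 9 <= d by lra.
have hdl0 : 0 <= dl.
  have h: 0 <= 6 * d * dl by rewrite hdl; exact: sqr_ge0.
  by rewrite -(pmulr_rge0 _ (_ : 0 < 6 * d)) //; lra.
have hdl1 : 54 * dl <= 169 / 25.
  have : (3 * mu + 2) ^+ 2 <= 169/25 by nra.
  rewrite -hdl; nra.
have hdl2 : 2 <= 3 * d * dl.
  have : 4 <= (3 * mu + 2) ^+ 2 by nra.
  rewrite -hdl; lra.
have F1 : 0 <= 2 * (1 - mu) / 3 * x1 * x3 + 1/3 * (x1 ^+ 2 + x3 ^+ 2).
  have : 0 <= (1 - mu) / 3 * (x1 + x3) ^+ 2 + mu / 3 * (x1 ^+ 2 + x3 ^+ 2).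
    apply: addr_ge0; apply: mulr_ge0; try exact: sqr_ge0; try lra.
    apply: addr_ge0; exact: sqr_ge0.
  have -> : (1 - mu) / 3 * (x1 + x3) ^+ 2 + mu / 3 * (x1 ^+ 2 + x3 ^+ 2)
     = 2 * (1 - mu) / 3 * x1 * x3 + 1/3 * (x1 ^+ 2 + x3 ^+ 2) by field.
  done.
have F2 : 0 <= - (2 * (1 - mu) / 5 * x2 * x3) + x2 ^+ 2 / 20 + 4 / 5 * x3 ^+ 2.
  set b := 2 * (1 - mu) / 5.
  have hb0 : 0 <= b by rewrite /b; lra.
  have hb1 : b <= 2/5 by rewrite /b; lra.
  have : 0 <= b / 2 * (x2 / 2 - 2 * x3) ^+ 2 + (1/20 - b / 8) * x2 ^+ 2
              + (4/5 - 2 * b) * x3 ^+ 2.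
    apply: addr_ge0; first apply: addr_ge0; apply: mulr_ge0; try exact: sqr_ge0; lra.
  have -> : b / 2 * (x2 / 2 - 2 * x3) ^+ 2 + (1/20 - b / 8) * x2 ^+ 2
              + (4/5 - 2 * b) * x3 ^+ 2 =
     - (b * x2 * x3) + x2 ^+ 2 / 20 + 4 / 5 * x3 ^+ 2 by field.
  done.
have F3 : 0 <= - (dl * x2 * x4) + dl / 3 * x2 ^+ 2 + 3 / 4 * dl * x4 ^+ 2.
  have : 0 <= dl / 3 * (x2 - 3 / 2 * x4) ^+ 2.
    apply: mulr_ge0; [lra | exact: sqr_ge0].
  have -> : dl / 3 * (x2 - 3 / 2 * x4) ^+ 2 =
    - (dl * x2 * x4) + dl / 3 * x2 ^+ 2 + 3 / 4 * dl * x4 ^+ 2 by field.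
  done.
have F4 : 0 <= (4 * l + 14/5) * x3 ^+ 2 + (2 * mu + 4 / 3) * x3 * x4
               + (9 / 4 * dl - m) * x4 ^+ 2.
  apply: blk2; first lra.
  have hP : m * d * (13 * l + 12) <= 1 / 243.
    have : m * d * (13 * l + 12) * 243 <= m * (27 * (13 * l + 12) * d ^+ 2).
      have : 0 <= m * d * (13 * l + 12) by apply: mulr_ge0; [apply: mulr_ge0|]; lra.
      nra.
    lra.
  have hQ : 12 * (m * d) * (4 * l + 14/5) <= 12 * (m * d) * (13 * l + 12).
    have : 0 <= m * d by apply: mulr_ge0; lra.
    nra.
  have hg : (2 * mu + 4 / 3) ^+ 2 = 8 / 3 * (d * dl).
    have -> : (2 * mu + 4 / 3) ^+ 2 = 4 / 9 * (3 * mu + 2) ^+ 2 by field.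
    by rewrite -hdl; field.
  rewrite hg.
  (* need 8/3 d dl <= 4 (4l+14/5)(9/4 dl - m) *)
  have hmd : 3 * (4 * (4 * l + 14/5) * m) * d <= d * dl * (28 * l + 2).
    have : 2/3 * (28 * l + 2) <= d * dl * (28 * l + 2) by nra.
    nra.
  have hx : 4 * (4 * l + 14/5) * m <= dl * (28 * l + 2) / 3.
    nra.
  nra.
have F5 : x0 ^+ 2 <= 2 * (x0 - x2) ^+ 2 + 2 * x2 ^+ 2.
  have := sqr_ge0 (x0 - 2 * x2). nra.
have G1 : 0 <= (4 * l - 2 * m) * (x0 - x2) ^+ 2 by apply: mulr_ge0; [lra | exact: sqr_ge0].
have G2 : 0 <= (2 * (3 - 8 * mu) / 15 - 1/20 - dl/3 - 3 * m) * x2 ^+ 2.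
  by apply: mulr_ge0; [lra | exact: sqr_ge0].
have G3 : 0 <= (13/36 - m) * x1 ^+ 2 by apply: mulr_ge0; [lra | exact: sqr_ge0].
have G4 : 0 <= (1/15 - m) * x3 ^+ 2 by apply: mulr_ge0; [lra | exact: sqr_ge0].
have G5 : m * x0 ^+ 2 <= m * (2 * (x0 - x2) ^+ 2 + 2 * x2 ^+ 2) by apply: ler_wpM2l.
rewrite /Q0.
have E : Q0 l mu dl x0 x1 x2 x3 x4 - m * (x0 ^+ 2 + x1 ^+ 2 + x2 ^+ 2 + x3 ^+ 2 + x4 ^+ 2)
  = (m * (2 * (x0 - x2) ^+ 2 + 2 * x2 ^+ 2) - m * x0 ^+ 2)
  + (2 * (1 - mu) / 3 * x1 * x3 + 1/3 * (x1 ^+ 2 + x3 ^+ 2))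
  + (- (2 * (1 - mu) / 5 * x2 * x3) + x2 ^+ 2 / 20 + 4 / 5 * x3 ^+ 2)
  + (- (dl * x2 * x4) + dl / 3 * x2 ^+ 2 + 3 / 4 * dl * x4 ^+ 2)
  + ((4 * l + 14/5) * x3 ^+ 2 + (2 * mu + 4 / 3) * x3 * x4 + (9 / 4 * dl - m) * x4 ^+ 2)
  + (4 * l - 2 * m) * (x0 - x2) ^+ 2
  + (2 * (3 - 8 * mu) / 15 - 1/20 - dl/3 - 3 * m) * x2 ^+ 2
  + (13/36 - m) * x1 ^+ 2 + (1/15 - m) * x3 ^+ 2.
  by rewrite /Q0; field.
rewrite -subr_ge0 -/(Q0 _ _ _ _ _ _ _ _) E.
lra.
Qed.
Lemma upperQ (R : realFieldType) (l mu d dl K x0 x1 x2 x3 x4 : R) :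
  0 < l -> 0 < mu -> mu <= 5^-1 -> d = 10 * l + mu + 9 ->
  6 * d * dl = (3 * mu + 2) ^+ 2 -> 8 * l + 1 <= K -> 4 * l + 6 <= K ->
  Q0 l mu dl x0 x1 x2 x3 x4 <= K * (x0 ^+ 2 + x1 ^+ 2 + x2 ^+ 2 + x3 ^+ 2 + x4 ^+ 2).
Proof.
move=> hl hmu0 hmu1 hd hdl hK1 hK2.
have hmu1' : mu <= 1/5 by rewrite div1r.
have hd9 : 9 <= d by lra.
have hdl0 : 0 <= dl.
  have h: 0 <= 6 * d * dl by rewrite hdl; exact: sqr_ge0.
  by rewrite -(pmulr_rge0 _ (_ : 0 < 6 * d)) //; lra.
have hdl1 : 54 * dl <= 169 / 25.
  have : (3 * mu + 2) ^+ 2 <= 169/25 by nra.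
  rewrite -hdl; nra.
have H1 : 2 * (1 - mu) / 3 * x1 * x3 <= 1/3 * (x1 ^+ 2 + x3 ^+ 2).
  have := sqr_ge0 (x1 - x3); have := sqr_ge0 x1; have := sqr_ge0 x3; nra.
have H2 : - (2 * (1 - mu) / 5 * x2 * x3) <= 1/5 * (x2 ^+ 2 + x3 ^+ 2).
  have := sqr_ge0 (x2 + x3); have := sqr_ge0 x2; have := sqr_ge0 x3; nra.
have H3 : - (dl * x2 * x4) <= dl / 2 * (x2 ^+ 2 + x4 ^+ 2).
  have := sqr_ge0 (x2 + x4); nra.
have H4 : (2 * mu + 4 / 3) * x3 * x4 <= 13/15 * (x3 ^+ 2 + x4 ^+ 2).
  have := sqr_ge0 (x3 - x4); have := sqr_ge0 x3; have := sqr_ge0 x4; nra.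
have H5 : 4 * l * x0 ^+ 2 - 8 * l * x0 * x2 + 4 * l * x2 ^+ 2 <= 8 * l * (x0 ^+ 2 + x2 ^+ 2).
  have := sqr_ge0 (x0 + x2); nra.
have s0 := sqr_ge0 x0; have s1 := sqr_ge0 x1; have s2 := sqr_ge0 x2;
have s3 := sqr_ge0 x3; have s4 := sqr_ge0 x4.
have G0 : (8 * l) * x0 ^+ 2 <= K * x0 ^+ 2 by apply: ler_wpM2r; lra.
have G1 : 2 * x1 ^+ 2 <= K * x1 ^+ 2 by apply: ler_wpM2r; lra.
have G2 : (8 * l + 1) * x2 ^+ 2 <= K * x2 ^+ 2 by apply: ler_wpM2r; lra.
have G3 : (4 * l + 6) * x3 ^+ 2 <= K * x3 ^+ 2 by apply: ler_wpM2r; lra.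
have G4 : 6 * x4 ^+ 2 <= K * x4 ^+ 2 by apply: ler_wpM2r; lra.
have G5 : dl * x4 ^+ 2 <= 1/7 * x4 ^+ 2 by apply: ler_wpM2r; lra.
have G6 : dl * x2 ^+ 2 <= 1/7 * x2 ^+ 2 by apply: ler_wpM2r; lra.
have G7 : mu * x2 ^+ 2 <= 1/5 * x2 ^+ 2 by apply: ler_wpM2r; lra.
have G8 : 0 <= mu * x2 ^+ 2 by apply: mulr_ge0; lra.
rewrite /Q0.
lra.
Qed.

Lemma mfacts (R : realFieldType) (lam mu m : R) : 0 < lam -> 0 < mu -> 0 <= m ->
  m = Num.min (8 * lam / (5 * (3 + 800 * lam)))
          (Num.min (1500^-1) ((27 * (13 * lam + 12) * (10 * lam + mu + 9) ^+ 2)^-1)) ->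
  [/\ 15 * m <= 8 * lam, 1500 * m <= 1 &
      m * (27 * (13 * lam + 12) * (10 * lam + mu + 9) ^+ 2) <= 1].
Proof.
move=> hlam hmu hm0 hmin.
split.
- have h1 : m <= 8 * lam / (5 * (3 + 800 * lam)) by rewrite hmin ge_min lexx.
  have hp : 0 < 5 * (3 + 800 * lam) by lra.
  have h2 := ler_wpM2r (ltW hp) h1.
  rewrite divfK ?gt_eqF // in h2.
  nra.
- have h1 : m <= 1500^-1 by rewrite hmin ge_min [X in _ || X]ge_min lexx orbT.
  have h2 := ler_wpM2l (_ : (0:R) <= 1500) h1.
  rewrite mulfV ?pnatr_eq0 // in h2; apply: h2; lra.
- have h1 : m <= (27 * (13 * lam + 12) * (10 * lam + mu + 9) ^+ 2)^-1.
    by rewrite hmin ge_min [X in _ || X]ge_min lexx !orbT.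
  have hpos : 0 < 27 * (13 * lam + 12) * (10 * lam + mu + 9) ^+ 2.
    by apply: mulr_gt0; [apply: mulr_gt0; lra | apply: exprn_gt0; lra].
  have h2 := ler_wpM2r (ltW hpos) h1.
  by rewrite mulVf ?gt_eqF // in h2.
Qed.

Theorem lemmat (R : realType) (lam mu A Z0 Z1 Z2 Z3 Z4 Z5 Z6 Z7 : R)
  (hlam : 0 < lam) (hmu0 : 0 < mu) (hmu1 : mu <= 5^-1) (hA : 0 < A)
  (hZ : `|Z0| + `|Z1| + `|Z2| + `|Z3| + `|Z4| + `|Z5| + `|Z6| + `|Z7|
          < gamma1 lam mu)
  (eta : 'cV[R]_5) (heta : eta != 0) :
  let B := A^-1 *: Mmat lam mu Z0 Z1 Z2 Z3 Z4 Z5 Z6 Z7 in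
  gamma1 lam mu / A * (eta^T *m eta) 0 0 < qform B eta /\
  qform B eta < gamma2 lam mu / A * (eta^T *m eta) 0 0.
Proof.
move=> B.
pose x0 := eta ord0 0.
pose x1 := eta (lift ord0 ord0) 0.
pose x2 := eta (lift ord0 (lift ord0 ord0)) 0.
pose x3 := eta (lift ord0 (lift ord0 (lift ord0 ord0))) 0.
pose x4 := eta (lift ord0 (lift ord0 (lift ord0 (lift ord0 ord0)))) 0.
pose d := 10 * lam + mu + 9.
pose dl := (3 * mu + 2) ^+ 2 / (6 * d).
have hd0 : 0 < d by rewrite /d; lra.
have hdl : 6 * d * dl = (3 * mu + 2) ^+ 2.
  by rewrite /dl; field; rewrite gt_eqF.
pose N := x0 ^+ 2 + x1 ^+ 2 + x2 ^+ 2 + x3 ^+ 2 + x4 ^+ 2.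
pose P := Z1 * x0 * x0 + Z2 * x0 * x1 + Z3 * x0 * x2 + Z4 * x0 * x3 + Z0 * x1 * x1
   + Z5 * x3 * x2 + Z6 * x3 * x3 + Z7 * x4 * x3.
have EN : (eta^T *m eta) 0 0 = N.
  rewrite /N /x0 /x1 /x2 /x3 /x4 !mxE !big_ord_recl big_ord0 !mxE /=.
  ring.
have EQ : qform B eta = A^-1 * (Q0 lam mu dl x0 x1 x2 x3 x4 + P).
  rewrite /P /Q0 /dl /x0 /x1 /x2 /x3 /x4 /B /qform /Mmat !mxE.
  rewrite !big_ord_recl !big_ord0 !mxE /=.
  rewrite !big_ord_recl !big_ord0 !mxE /=.
  rewrite -/d.
  field.
  by rewrite !gt_eqF.
rewrite EN EQ.
set g1 := gamma1 lam mu.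
set sZ := `|Z0| + `|Z1| + `|Z2| + `|Z3| + `|Z4| + `|Z5| + `|Z6| + `|Z7|.
have hsZ0 : 0 <= sZ by rewrite /sZ; have := normr_ge0 Z0; have := normr_ge0 Z1;
  have := normr_ge0 Z2; have := normr_ge0 Z3; have := normr_ge0 Z4;
  have := normr_ge0 Z5; have := normr_ge0 Z6; have := normr_ge0 Z7; lra.
have hN : 0 < N.
  have s0 := sqr_ge0 x0; have s1 := sqr_ge0 x1; have s2 := sqr_ge0 x2;
  have s3 := sqr_ge0 x3; have s4 := sqr_ge0 x4.
  rewrite lt_neqAle; apply/andP; split; last by rewrite /N; lra.
  apply/negP => /eqP hN0.
  have z0 : x0 = 0 by apply/eqP; rewrite -sqrf_eq0 eq_le sqr_ge0 andbT; rewrite /N in hN0; lra.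
  have z1 : x1 = 0 by apply/eqP; rewrite -sqrf_eq0 eq_le sqr_ge0 andbT; rewrite /N in hN0; lra.
  have z2 : x2 = 0 by apply/eqP; rewrite -sqrf_eq0 eq_le sqr_ge0 andbT; rewrite /N in hN0; lra.
  have z3 : x3 = 0 by apply/eqP; rewrite -sqrf_eq0 eq_le sqr_ge0 andbT; rewrite /N in hN0; lra.
  have z4 : x4 = 0 by apply/eqP; rewrite -sqrf_eq0 eq_le sqr_ge0 andbT; rewrite /N in hN0; lra.
  move/eqP: heta; apply; apply/matrixP => i j; rewrite !mxE (ord1 j).
  case: i => [[|[|[|[|[|k]]]]] hi] //.
  - by rewrite -z0 /x0; congr (eta _ _); apply: val_inj.
  - by rewrite -z1 /x1; congr (eta _ _); apply: val_inj.
  - by rewrite -z2 /x2; congr (eta _ _); apply: val_inj.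
  - by rewrite -z3 /x3; congr (eta _ _); apply: val_inj.
  - by rewrite -z4 /x4; congr (eta _ _); apply: val_inj.
have hPl : - (sZ * N) <= P.
  by have /andP[] := @Pbound _ Z0 Z1 Z2 Z3 Z4 Z5 Z6 Z7 x0 x1 x2 x3 x4 N sZ erefl erefl.
have hPu : P <= sZ * N.
  by have /andP[] := @Pbound _ Z0 Z1 Z2 Z3 Z4 Z5 Z6 Z7 x0 x1 x2 x3 x4 N sZ erefl erefl.
have hg1 : sZ < g1 by [].
pose m := 2 * g1.
have hm0 : 0 <= m by rewrite /m; lra.
have hmin : m = Num.min (8 * lam / (5 * (3 + 800 * lam)))
          (Num.min (1500^-1) ((27 * (13 * lam + 12) * (10 * lam + mu + 9) ^+ 2)^-1)).
  by rewrite /m /g1 /gamma1 mulrA divff ?mul1r // pnatr_eq0.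
have [hma hmb hmc] := @mfacts _ lam mu m hlam hmu0 hm0 hmin.
have hL := @lowerQ _ lam mu d dl m x0 x1 x2 x3 x4 hlam hmu0 hmu1 (erefl d) hdl hm0 hma hmb hmc.
pose K := Num.max (8 * lam + 1) (4 * lam + 6).
have hg2 : gamma2 lam mu = K + g1.
  by rewrite /gamma2 /K -/g1; case: (leP (8 * lam + 1) (4 * lam + 6)) => h;
   [rewrite !max_r // lerD2r | rewrite !max_l // lerD2r ?ltW].
have hK1 : 8 * lam + 1 <= K by rewrite /K le_max lexx.
have hK2 : 4 * lam + 6 <= K by rewrite /K le_max lexx orbT.
have hU := @upperQ _ lam mu d dl K x0 x1 x2 x3 x4 hlam hmu0 hmu1 (erefl d) hdl hK1 hK2.
have hAi : 0 < A^-1 by rewrite invr_gt0.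
rewrite -/N in hL hU.
rewrite hg2.
have e1 : g1 / A * N = A^-1 * (g1 * N) by ring.
have e2 : (K + g1) / A * N = A^-1 * ((K + g1) * N) by ring.
rewrite e1 e2 !ltr_pM2l //.
have hsN : sZ * N < g1 * N by rewrite ltr_pM2r.
rewrite /m in hL.
move: hL hU hPl hPu hsN; clear.
move=> hL hU hPl hPu hsN.
split; lra.
Qed.
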